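(* Let $(x^{(k)})_{k\in\mathbb N}$ be a sequence of nonabsorbing mixed action profiles in $X$ converging to $x$, and suppose ${\cal E}_J(x^{(k)})\ne\emptyset$ for every $k$. Then $x\in X$ and ${\cal E}_J(x)\ne\emptyset$.
   Context: $I$ is a finite set of players, $A_i$ finite nonempty action sets, $A=\prod_iA_i$, $p:A\to[0,1]$ an absorption probability function. Let $\Xi_i=\Delta(A_i)$, $\Xi=\prod_i\Xi_i$, and for $x\in\Xi$ let $p(x)=\sum_{a\in A}p(a)\prod_jx_j(a_j)$ (multilinear extension; similarly for partially pure profiles such as $(a_J,x_{-J})$). Let $B=\{a\in A:p(a)=0\}$ and let $X=\{x\in\Xi: p(x)=0\}$ be the set of nonabsorbing mixed action profiles (equivalently, mixed profiles whose support $\prod_i{\rm supp}(x_i)$ is contained in a connected component of the graph on $B$ where two profiles are adjacent iff they differ in exactly one player's action). For $x\in X$, a pair $(J,a_J)$ with $\emptyset\ne J\subseteq I$ and $a_J\in\prod_{i\in J}A_i$ is an exit at $x$ if $p(a_J,x_{-J})>0$ and $p(a_{J'},x_{-J'})=0$ for every proper subset $J'\subsetneq J$. It is a joint exit if $|J|\ge2$. ${\cal E}_J(x)$ denotes the set of joint exits at $x$. *)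

(* Defs.v *)
From HB Require Import structures.
From mathcomp Require Import all_boot all_order all_algebra.
From mathcomp Require Import all_classical all_reals topology normedtype sequences.
Set Implicit Arguments. Unset Strict Implicit. Unset Printing Implicit Defensive.
Import Order.TTheory GRing.Theory Num.Theory.
Local Open Scope ring_scope.

Section Game.
Variables (R : realType) (I : finType) (A : I -> finType).

Definition profile := {dffun forall i : I, A i}.

(* a mixed action profile (element of prod_i Delta(A_i) once mixed_profile holds) *)
Definition mprofile := forall i : I, A i -> R.

Definition mixed_profile (x : mprofile) : Prop :=
  forall i, (forall c, 0 <= x i c) /\ \sum_(c : A i) x i c = 1.

Definition absorption (p : profile -> R) : Prop :=
  forall a, 0 <= p a <= 1.

Definition pext (p : profile -> R) (x : mprofile) : R :=
  \sum_(a : profile) p a * \prod_(j : I) x j (a j).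

(* the partially pure profile (a_J, x_{-J}); only the coordinates of b in J matter *)
Definition mixJ (x : mprofile) (J : {set I}) (b : profile) : mprofile :=
  fun i c => if i \in J then (c == b i)%:R else x i c.

Definition nonabsorbing (p : profile -> R) (x : mprofile) : Prop :=
  mixed_profile x /\ pext p x = 0.

Definition is_exit (p : profile -> R) (x : mprofile) (J : {set I}) (b : profile) : Prop :=
  nonabsorbing p x /\ (0 < #|J|)%N /\ 0 < pext p (mixJ x J b) /\
  (forall J' : {set I}, J' \proper J -> pext p (mixJ x J' b) = 0).

(* E_J(x) <> emptyset : there is a joint exit (|J| >= 2) at x *)
Definition has_joint_exit (p : profile -> R) (x : mprofile) : Prop :=
  exists (J : {set I}) (b : profile), (2 <= #|J|)%N /\ is_exit p x J b.

End Game.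

(* Main.v *)
Require Import Defs.
From HB Require Import structures.
From mathcomp Require Import all_boot all_order all_algebra.
From mathcomp Require Import all_classical all_reals topology normedtype sequences.
Import Order.TTheory GRing.Theory Num.Theory numFieldNormedType.Exports.
Local Open Scope classical_set_scope.
Local Open Scope ring_scope.

Section Helpers.
Variables (R : realType) (I : finType) (A : I -> finType).

Lemma pext_ge0 (p : profile A -> R) (z : mprofile R A) :
  (forall a, 0 <= p a) -> (forall i c, 0 <= z i c) -> 0 <= pext p z.
Proof.
move=> hp hz; apply: sumr_ge0 => a _; apply: mulr_ge0 => //.
by apply: prodr_ge0 => j _.
Qed.

Lemma pext_gt0P (p : profile A -> R) (z : mprofile R A) :
  (forall a, 0 <= p a) -> (forall i c, 0 <= z i c) ->
  0 < pext p z <-> exists a, 0 < p a /\ forall j, 0 < z j (a j).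
Proof.
move=> hp hz; split.
- move=> h.
  have : pext p z != 0 by rewrite gt_eqF.
  rewrite /pext psumr_neq0; last first.
    by move=> a _; apply: mulr_ge0 => //; apply: prodr_ge0 => j _.
  case/hasP => a _ /= ha; exists a.
  have hpa : p a != 0 by apply/eqP => e; move: ha; rewrite e mul0r ltxx.
  have hpr : \prod_j z j (a j) != 0 by apply/eqP => e; move: ha; rewrite e mulr0 ltxx.
  split; first by rewrite lt_def hpa hp.
  move=> j; rewrite lt_def hz andbT.
  move: hpr.
  by move/prodf_neq0 => /(_ j isT).
- case=> a [pa za]; rewrite /pext (bigD1 a) //=.
  apply: ltr_pwDl; last first.
    by apply: sumr_ge0 => b _; apply: mulr_ge0 => //; apply: prodr_ge0.
  by apply: mulr_gt0 => //; apply: prodr_gt0.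
Qed.

Lemma pext_eq0P (p : profile A -> R) (z : mprofile R A) :
  (forall a, 0 <= p a) -> (forall i c, 0 <= z i c) ->
  pext p z = 0 -> forall a, 0 < p a -> exists j, ~ (0 < z j (a j)).
Proof.
move=> hp hz h0 a pa; apply: contrapT => hn.
have : 0 < pext p z.
  apply: (pext_gt0P _ _ hp hz).2; exists a; split => // j.
  by apply: contrapT => hj; apply: hn; exists j.
by rewrite h0 ltxx.
Qed.

Lemma mixJ_ge0 (x : mprofile R A) (J : {set I}) (b : profile A) :
  (forall i c, 0 <= x i c) -> forall i (c : A i), 0 <= mixJ x J b c.
Proof. by move=> hx i c; rewrite /mixJ; case: ifP => // _; rewrite ler0n. Qed.

Lemma mixJ_gt0 (x : mprofile R A) (J : {set I}) (b : profile A) i (c : A i) :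
  0 < mixJ x J b c -> (i \in J -> c = b i) /\ (i \notin J -> 0 < x i c).
Proof.
rewrite /mixJ; case: ifP => hi /=; last by move=> h; split.
by case: eqP => // _; rewrite ltxx.
Qed.

Lemma mixJ_gt0' (x : mprofile R A) (J : {set I}) (b : profile A) i (c : A i) :
  (i \in J -> c = b i) -> (i \notin J -> 0 < x i c) -> 0 < mixJ x J b c.
Proof.
rewrite /mixJ; case: ifP => hi h1 h2; last by apply: h2.
by rewrite h1 // eqxx ltr01.
Qed.

End Helpers.
Arguments pext_gt0P [R I A].
Arguments mixJ_ge0 [R I A].
Arguments mixJ_gt0 [R I A x J b i c].
Arguments mixJ_gt0' [R I A x J b i c].
Arguments pext_ge0 [R I A].

Theorem mainTheorem5 (R : realType) (I : finType) (A : I -> finType)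
    (p : profile A -> R) (xs : nat -> mprofile R A) (x : mprofile R A) :
  (forall i, (0 < #|A i|)%N) ->
  absorption p ->
  (forall k, nonabsorbing p (xs k)) ->
  (forall i (c : A i), (fun k => xs k i c) @ \oo --> (x i c : R)) ->
  (forall k, has_joint_exit p (xs k)) ->
  nonabsorbing p x /\ has_joint_exit p x.
Proof.
move=> _ hab hna hcv hje.
have hp : forall a, 0 <= p a by move=> a; case/andP: (hab a).
have hx0 : forall i c, 0 <= x i c.
  move=> i c; rewrite leNgt; apply/negP => hlt.
  have H := @cvgr_lt _ _ _ eventually_filter _ _ (hcv i c) 0 hlt.
  have [k] := filter_ex H; rewrite /=; rewrite ltNge.
  by case: (hna k) => hm _; case: (hm i) => /(_ c) ->.
have hsum : forall i, \sum_c x i c = 1.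
  move=> i.
  have hc : (fun k => \sum_(c <- index_enum (A i)) xs k i c) @ \oo -->
            \sum_(c <- index_enum (A i)) x i c.
    elim: (index_enum (A i)) => [|c r IH].
      under eq_fun do rewrite big_nil; rewrite big_nil; exact: cvg_cst.
    under eq_fun do rewrite big_cons; rewrite big_cons.
    exact: cvgD.
  have e : (fun k => \sum_(c <- index_enum (A i)) xs k i c) = fun=> 1.
    by apply: funext => k; case: (hna k) => hm _; case: (hm i) => _ ->.
  rewrite e in hc.
  by have := cvg_unique _ hc (cvg_cst (1 : R)) ; move=> ->.
have [k hk] : exists k, forall i c, 0 < x i c -> 0 < xs k i c.
  have : \forall k \near \oo, forall ic : {i : I & A i},
      0 < x (projT1 ic) (projT2 ic) -> 0 < xs k (projT1 ic) (projT2 ic).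
    apply: filter_forall => -[i c] /=.
    case: (boolP (0 < x i c)) => h.
      have H := @cvgr_gt _ _ _ eventually_filter _ _ (hcv i c) 0 h.
      by apply: (filterS _ H) => n hn _.
    by apply: nearW => n /negP.
  move=> H; have [k hk] := filter_ex H; exists k => i c; exact: (hk (existT _ i c)).
set y := xs k.
have [[hymix hy0] hy0'] : nonabsorbing p y /\ forall i c, 0 <= y i c.
  split; first exact: hna.
  by move=> i c; case: (hna k) => hm _; case: (hm i) => /(_ c).
have px0 : pext p x = 0.
  apply/eqP; rewrite eq_le pext_ge0 // andbT leNgt; apply/negP.
  move=> /(pext_gt0P _ _ hp hx0).1 [a [pa za]].
  have : 0 < pext p y by apply: (pext_gt0P _ _ hp hy0').2; exists a; split => // j; apply: hk.
  by rewrite hy0 ltxx.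
have nax : nonabsorbing p x by split => // i; split.
split => //.
case: (hje k) => J [b [hJ2 [_ [_ [hpos hprop]]]]].
have [a' [pa' za']] := (pext_gt0P _ _ hp (mixJ_ge0 _ J b hy0')).1 hpos.
pose P := fun K : {set I} => 0 < pext p (mixJ x K a').
have [K /minsetP [PK minK]] : {K | minset P K}.
  apply: ex_minset; exists [set: I]%SET; rewrite /P.
  apply: (pext_gt0P _ _ hp (mixJ_ge0 _ _ _ hx0)).2; exists a'; split => // j.
  by apply: mixJ_gt0' => //; rewrite inE.
have hKprop : forall K' : {set I}, K' \proper K -> pext p (mixJ x K' a') = 0.
  move=> K' hK'; apply/eqP; rewrite eq_le pext_ge0 ?andbT //; last exact: mixJ_ge0.
  rewrite leNgt; apply/negP => hP.
  have e := minK K' hP (proper_sub hK').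
  by move: hK'; rewrite e fintype.properxx.
have hK0 : (0 < #|K|)%N.
  rewrite card_gt0; apply/eqP => e.
  move: PK; rewrite /P e.
  have -> : mixJ x finset.set0 a' = x by apply: functional_extensionality_dep => i; apply: funext => c; rewrite /mixJ finset.in_set0.
  by rewrite px0 ltxx.
exists K, a'; split; last by split => //.
rewrite ltnNge; apply/negP => hK1.
have /cards1P [i Ki] : #|K| == 1%N by rewrite eqn_leq hK1.
move: PK; rewrite /P Ki => /(pext_gt0P _ _ hp (mixJ_ge0 _ _ _ hx0)).1 [a [pa za]].
have zi := mixJ_gt0 (za i); rewrite finset.set11 in zi.
have ai : a i = a' i by case: zi => /(_ isT).
have zj : forall j, j != i -> 0 < y j (a j).
  move=> j ji; have [_ h] := mixJ_gt0 (za j).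
  by apply: hk; apply: h; rewrite finset.in_set1.
case: (boolP (i \in J)) => iJ.
- have hpr : [set i]%SET \proper J.
    rewrite properEcard finset.sub1set iJ finset.cards1 /=; exact: hJ2.
  have := hprop _ hpr.
  have : 0 < pext p (mixJ y [set i]%SET b).
    apply: (pext_gt0P _ _ hp (mixJ_ge0 _ _ _ hy0')).2; exists a; split => // j.
    apply: mixJ_gt0'.
      rewrite finset.in_set1 => /eqP ->; rewrite ai.
      by have [h _] := mixJ_gt0 (za' i); apply: h.
    by rewrite finset.in_set1 => ji; apply: zj.
  by move=> h e; move: h; rewrite e ltxx.
- have : 0 < pext p y.
    apply: (pext_gt0P _ _ hp hy0').2; exists a; split => // j.
    case: (eqVneq j i) => [->|ji]; last by apply: zj.
    by rewrite ai; have [_ h] := mixJ_gt0 (za' i); apply: h.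
  by rewrite hy0 ltxx.
Qed.
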